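(* Let $\alpha_1,\alpha_2,\alpha_3>0$ with $\alpha_1^{-2}=\alpha_2^{-2}+\alpha_3^{-2}$, let $a_1=-\alpha_2\alpha_3/\alpha_1$, $a_2=\alpha_3\alpha_1/\alpha_2$, $a_3=\alpha_1\alpha_2/\alpha_3$, let $\lambda>0$ with $\lambda^2=a_2^2-a_1a_3$, and let $b_1,\dots,b_5,c_1,\dots,c_5,d_1,\dots,d_6$ be real constants as in the context (eigenvector data). Let $B,B',C,C',D,D'\in\mathbb{C}$ be arbitrary. Define $w_j:\mathbb{R}\to\mathbb{C}$ by $2w_1=i\alpha_1e^{ia_1t}$, $2w_2=\alpha_2e^{ia_2t}$, $2w_3=\alpha_3e^{ia_3t}$; define $x=2\,\mathrm{Re}\big((Bb_1+Cc_1)e^{\frac i2\lambda t}\big)$, $p_1=ie^{ia_1t}\big(Bb_2e^{\frac i2\lambda t}+\bar Bb_4e^{-\frac i2\lambda t}+Dd_1e^{\frac{3i}2\lambda t}+\bar Dd_4e^{-\frac{3i}2\lambda t}\big)$, $p_2=e^{ia_2t}\big(Cc_2e^{\frac i2\lambda t}+\bar Cc_4e^{-\frac i2\lambda t}+Dd_2e^{\frac{3i}2\lambda t}+\bar Dd_5e^{-\frac{3i}2\lambda t}\big)$, $p_3=e^{ia_3t}\big((Bb_3+Cc_3)e^{\frac i2\lambda t}+(\bar Bb_5+\bar Cc_5)e^{-\frac i2\lambda t}+Dd_3e^{\frac{3i}2\lambda t}+\bar Dd_6e^{-\frac{3i}2\lambda t}\big)$, and define $y,q_1,q_2,q_3$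 by the same formulas with $B,C,D$ replaced by $B',C',D'$ (so $y$ replaces $x$, $q_j$ replaces $p_j$). Let $z:\mathbb{R}\to\mathbb{R}$ and $r_1,r_2,r_3:\mathbb{R}\to\mathbb{C}$ be any functions with $\frac{dz}{dt}=\mathrm{Im}(\bar p_1q_1-\bar p_2q_2-\bar p_3q_3)$, $\frac{dr_1}{dt}=ixp_1+iyq_1+\overline{p_2p_3}+\overline{q_2q_3}$, $\frac{dr_2}{dt}=ixp_2-iyq_2-\overline{p_3p_1}+\overline{q_3q_1}$, $\frac{dr_3}{dt}=ixq_3+iyp_3-\overline{p_1q_2}-\overline{p_2q_1}$. Then the subset of $\mathbb{R}^7=\mathbb{R}\oplus\mathbb{C}^3$ $$M=\Big\{\big(y_1y(t)-y_2x(t)+z(t),\ \tfrac12(y_1^2+y_2^2)w_1(t)+y_1p_1(t)+y_2q_1(t)+r_1(t),\ \tfrac12(y_1^2-y_2^2)w_2(t)+y_1p_2(t)-y_2q_2(t)+r_2(t),\ y_1y_2w_3(t)+y_1q_3(t)+y_2p_3(t)+r_3(t)\big):y_1,y_2,t\in\mathbb{R}\Big\}$$ is an associative 3-fold in $\mathbb{R}^7$ wherever it is nonsingular.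
   Context: Let $(x_1,\dots,x_7)$ be coordinates on $\mathbb{R}^7$ with Euclidean metric $g$, and write $dx_{ijk}=dx_i\wedge dx_j\wedge dx_k$. Define $\varphi=dx_{123}+dx_{145}+dx_{167}+dx_{246}-dx_{257}-dx_{347}-dx_{356}$. An oriented 3-dimensional (immersed) submanifold $N\subseteq\mathbb{R}^7$ is an associative 3-fold if $\varphi|_{T_xN}=\mathrm{vol}_{T_xN}$ for all $x\in N$. Identify $\mathbb{R}^7=\mathbb{R}\oplus\mathbb{C}^3$ via $(x_1,\dots,x_7)\mapsto(x_1,\,x_2+ix_3,\,x_4+ix_5,\,x_6+ix_7)$. Eigenvector data: with $T$ the real $7\times7$ matrix whose rows are $(0,-\frac{\alpha_1}{2},\frac{\alpha_2}{2},\frac{\alpha_3}{2},\frac{\alpha_1}{2},-\frac{\alpha_2}{2},-\frac{\alpha_3}{2})$, $(\alpha_1,-2a_1,0,0,0,-\alpha_3,-\alpha_2)$, $(\alpha_2,0,-2a_2,0,\alpha_3,0,\alpha_1)$, $(\alpha_3,0,0,-2a_3,\alpha_2,\alpha_1,0)$, $(-\alpha_1,0,\alpha_3,\alpha_2,2a_1,0,0)$, $(-\alpha_2,-\alpha_3,0,-\alpha_1,0,2a_2,0)$, $(-\alpha_3,-\alpha_2,-\alpha_1,0,0,0,2a_3)$, the real constants $b_j,c_j,d_j$ are such that $\mathbf{b}_\pm,\mathbf{c}_\pm,\mathbf{d}_\pm$ are nonzero and $T\mathbf{b}_\pm=\pm\lambda\mathbf{b}_\pm$, $T\mathbf{c}_\pm=\pm\lambda\mathbf{c}_\pm$,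 $T\mathbf{d}_\pm=\pm3\lambda\mathbf{d}_\pm$, where $\mathbf{b}_+=(b_1,b_2,0,b_3,b_4,0,b_5)^{\mathrm T}$, $\mathbf{b}_-=(b_1,b_4,0,b_5,b_2,0,b_3)^{\mathrm T}$, $\mathbf{c}_+=(c_1,0,c_2,c_3,0,c_4,c_5)^{\mathrm T}$, $\mathbf{c}_-=(c_1,0,c_4,c_5,0,c_2,c_3)^{\mathrm T}$, $\mathbf{d}_+=(0,d_1,\dots,d_6)^{\mathrm T}$, $\mathbf{d}_-=(0,d_4,d_5,d_6,d_1,d_2,d_3)^{\mathrm T}$. *)

(* Defs.v *)
From Stdlib Require Import Reals.
From Coquelicot Require Import Coquelicot.
Open Scope R_scope.

Notation CC := Complex.C.

Definition cexpi (th : R) : CC := (cos th, sin th).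

Definition Tmat (al1 al2 al3 a1 a2 a3 : R) (i j : nat) : R :=
  match i, j with
  | 1,1 => 0 | 1,2 => -(al1/2) | 1,3 => al2/2 | 1,4 => al3/2 | 1,5 => al1/2 | 1,6 => -(al2/2) | 1,7 => -(al3/2)
  | 2,1 => al1 | 2,2 => -(2*a1) | 2,3 => 0 | 2,4 => 0 | 2,5 => 0 | 2,6 => -al3 | 2,7 => -al2
  | 3,1 => al2 | 3,2 => 0 | 3,3 => -(2*a2) | 3,4 => 0 | 3,5 => al3 | 3,6 => 0 | 3,7 => al1
  | 4,1 => al3 | 4,2 => 0 | 4,3 => 0 | 4,4 => -(2*a3) | 4,5 => al2 | 4,6 => al1 | 4,7 => 0
  | 5,1 => -al1 | 5,2 => 0 | 5,3 => al3 | 5,4 => al2 | 5,5 => 2*a1 | 5,6 => 0 | 5,7 => 0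
  | 6,1 => -al2 | 6,2 => -al3 | 6,3 => 0 | 6,4 => -al1 | 6,5 => 0 | 6,6 => 2*a2 | 6,7 => 0
  | 7,1 => -al3 | 7,2 => -al2 | 7,3 => -al1 | 7,4 => 0 | 7,5 => 0 | 7,6 => 0 | 7,7 => 2*a3
  | _,_ => 0
  end.

Definition mv (T : nat -> nat -> R) (v : nat -> R) (i : nat) : R :=
  T i 1%nat * v 1%nat + T i 2%nat * v 2%nat + T i 3%nat * v 3%nat + T i 4%nat * v 4%nat
  + T i 5%nat * v 5%nat + T i 6%nat * v 6%nat + T i 7%nat * v 7%nat.

Definition zero7 : nat -> R := fun _ => 0.

Definition bplus (b : nat -> R) (i : nat) : R :=
  match i with 1 => b 1%nat | 2 => b 2%nat | 4 => b 3%nat | 5 => b 4%nat | 7 => b 5%nat | _ => 0 end.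
Definition bminus (b : nat -> R) (i : nat) : R :=
  match i with 1 => b 1%nat | 2 => b 4%nat | 4 => b 5%nat | 5 => b 2%nat | 7 => b 3%nat | _ => 0 end.
Definition cplus (c : nat -> R) (i : nat) : R :=
  match i with 1 => c 1%nat | 3 => c 2%nat | 4 => c 3%nat | 6 => c 4%nat | 7 => c 5%nat | _ => 0 end.
Definition cminus (c : nat -> R) (i : nat) : R :=
  match i with 1 => c 1%nat | 3 => c 4%nat | 4 => c 5%nat | 6 => c 2%nat | 7 => c 3%nat | _ => 0 end.
Definition dplus (d : nat -> R) (i : nat) : R :=
  match i with 2 => d 1%nat | 3 => d 2%nat | 4 => d 3%nat | 5 => d 4%nat | 6 => d 5%nat | 7 => d 6%nat | _ => 0 end.
Definition dminus (d : nat -> R) (i : nat) : R :=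
  match i with 2 => d 4%nat | 3 => d 5%nat | 4 => d 6%nat | 5 => d 1%nat | 6 => d 2%nat | 7 => d 3%nat | _ => 0 end.

Definition eigvec (T : nat -> nat -> R) (mu : R) (v : nat -> R) : Prop :=
  v <> zero7 /\ forall i, mv T v i = mu * v i.

Local Open Scope C_scope.

Definition xfun (lam : R) (b c : nat -> R) (B C : CC) (t : R) : R :=
  2 * Re ((B * RtoC (b 1%nat) + C * RtoC (c 1%nat)) * cexpi (lam * t / 2)).

Definition p1fun (a1 lam : R) (b d : nat -> R) (B D : CC) (t : R) : CC :=
  Ci * cexpi (a1 * t) *
  (B * RtoC (b 2%nat) * cexpi (lam * t / 2) + Cconj B * RtoC (b 4%nat) * cexpi (- (lam * t / 2))
   + D * RtoC (d 1%nat) * cexpi (3 * lam * t / 2) + Cconj D * RtoC (d 4%nat) * cexpi (- (3 * lam * t / 2))).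

Definition p2fun (a2 lam : R) (c d : nat -> R) (C D : CC) (t : R) : CC :=
  cexpi (a2 * t) *
  (C * RtoC (c 2%nat) * cexpi (lam * t / 2) + Cconj C * RtoC (c 4%nat) * cexpi (- (lam * t / 2))
   + D * RtoC (d 2%nat) * cexpi (3 * lam * t / 2) + Cconj D * RtoC (d 5%nat) * cexpi (- (3 * lam * t / 2))).

Definition p3fun (a3 lam : R) (b c d : nat -> R) (B C D : CC) (t : R) : CC :=
  cexpi (a3 * t) *
  ((B * RtoC (b 3%nat) + C * RtoC (c 3%nat)) * cexpi (lam * t / 2)
   + (Cconj B * RtoC (b 5%nat) + Cconj C * RtoC (c 5%nat)) * cexpi (- (lam * t / 2))
   + D * RtoC (d 3%nat) * cexpi (3 * lam * t / 2) + Cconj D * RtoC (d 6%nat) * cexpi (- (3 * lam * t / 2))).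

Definition w1fun (al1 a1 t : R) : CC := Ci * RtoC al1 * cexpi (a1 * t) / RtoC 2.
Definition w2fun (al2 a2 t : R) : CC := RtoC al2 * cexpi (a2 * t) / RtoC 2.
Definition w3fun (al3 a3 t : R) : CC := RtoC al3 * cexpi (a3 * t) / RtoC 2.

Local Close Scope C_scope.

Definition det3 (u v w : nat -> R) (i j k : nat) : R :=
  u i * (v j * w k - v k * w j) - u j * (v i * w k - v k * w i) + u k * (v i * w j - v j * w i).

Definition phi (u v w : nat -> R) : R :=
  det3 u v w 1 2 3 + det3 u v w 1 4 5 + det3 u v w 1 6 7 + det3 u v w 2 4 6
  - det3 u v w 2 5 7 - det3 u v w 3 4 7 - det3 u v w 3 5 6.

Definition dot7 (u v : nat -> R) : R :=
  u 1%nat * v 1%nat + u 2%nat * v 2%nat + u 3%nat * v 3%nat + u 4%nat * v 4%nat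
  + u 5%nat * v 5%nat + u 6%nat * v 6%nat + u 7%nat * v 7%nat.

(* volume of the parallelepiped spanned by u v w: sqrt of the Gram determinant *)
Definition vol3 (u v w : nat -> R) : R :=
  sqrt (dot7 u u * (dot7 v v * dot7 w w - dot7 v w * dot7 w v)
      - dot7 u v * (dot7 v u * dot7 w w - dot7 v w * dot7 w u)
      + dot7 u w * (dot7 v u * dot7 w v - dot7 v v * dot7 w u)).

Definition lin_indep3 (u v w : nat -> R) : Prop :=
  forall a b c : R, (forall k, (1 <= k <= 7)%nat -> a * u k + b * v k + c * w k = 0) ->
    a = 0 /\ b = 0 /\ c = 0.

(* A map F : R^3 -> R^7 is associative wherever it is nonsingular: at every point where
   its partial derivatives exist and are linearly independent (F is an immersion there),
   the tangent 3-plane is associative, i.e. phi restricted to it is +- the volume form. *)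
Definition associative_where_nonsingular (F : R -> R -> R -> nat -> R) : Prop :=
  forall (s1 s2 t : R) (u v w : nat -> R),
    (forall k, (1 <= k <= 7)%nat -> is_derive (fun s => F s s2 t k) s1 (u k)) ->
    (forall k, (1 <= k <= 7)%nat -> is_derive (fun s => F s1 s t k) s2 (v k)) ->
    (forall k, (1 <= k <= 7)%nat -> is_derive (fun s => F s1 s2 s k) t (w k)) ->
    lin_indep3 u v w ->
    Rabs (phi u v w) = vol3 u v w.

Definition Mmap (X Y Z : R -> R) (W1 W2 W3 P1 P2 P3 Q1 Q2 Q3 R1 R2 R3 : R -> CC)
  (y1 y2 t : R) (k : nat) : R :=
  let c1 := (RtoC ((y1 ^ 2 + y2 ^ 2) / 2) * W1 t + RtoC y1 * P1 t + RtoC y2 * Q1 t + R1 t)%C in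
  let c2 := (RtoC ((y1 ^ 2 - y2 ^ 2) / 2) * W2 t + RtoC y1 * P2 t - RtoC y2 * Q2 t + R2 t)%C in
  let c3 := (RtoC (y1 * y2) * W3 t + RtoC y1 * Q3 t + RtoC y2 * P3 t + R3 t)%C in
  match k with
  | 1 => y1 * Y t - y2 * X t + Z t
  | 2 => Re c1 | 3 => Im c1
  | 4 => Re c2 | 5 => Im c2
  | 6 => Re c3 | 7 => Im c3
  | _ => 0
  end.

(* Main.v *)
Require Import Defs.
From Stdlib Require Import Reals Lra.
From Coquelicot Require Import Coquelicot.
Open Scope R_scope.
From Stdlib Require Import Lia.
Definition ek (k : nat) : nat -> R := fun j => if Nat.eqb j k then 1 else 0.
Definition crossv (u v : nat -> R) : nat -> R := fun k => phi u v (ek k).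

Lemma cross_props (u v : nat -> R) :
  let c := crossv u v in
  phi u v c = dot7 c c /\ dot7 u c = 0 /\ dot7 v c = 0 /\
  dot7 c c = dot7 u u * dot7 v v - dot7 u v * dot7 u v.
Proof.
  unfold crossv, phi, det3, dot7, ek; simpl.
  repeat split; ring.
Qed.
Lemma phi_ext (u v w w' : nat -> R) :
  (forall k, (1 <= k <= 7)%nat -> w k = w' k) -> phi u v w = phi u v w'.
Proof.
  intros H. unfold phi, det3.
  rewrite !H by lia. reflexivity.
Qed.

Lemma vol3_ext (u v w w' : nat -> R) :
  (forall k, (1 <= k <= 7)%nat -> w k = w' k) -> vol3 u v w = vol3 u v w'.
Proof.
  intros H. unfold vol3, dot7.
  rewrite !H by lia. reflexivity.
Qed.

Lemma assoc_of_cross (u v w : nat -> R) :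
  (forall k, (1 <= k <= 7)%nat -> w k = crossv u v k) ->
  Rabs (phi u v w) = vol3 u v w.
Proof.
  intros H. rewrite (phi_ext u v w (crossv u v) H), (vol3_ext u v w (crossv u v) H).
  destruct (cross_props u v) as [H1 [H2 [H3 H4]]].
  set (c := crossv u v) in *.
  unfold vol3. rewrite H1.
  replace (dot7 v u) with (dot7 u v) by (unfold dot7; ring).
  replace (dot7 c u) with (dot7 u c) by (unfold dot7; ring).
  replace (dot7 c v) with (dot7 v c) by (unfold dot7; ring).
  replace (dot7 v c) with (dot7 v c) by reflexivity.
  rewrite H2, H3.
  replace (dot7 u u * (dot7 v v * dot7 c c - 0 * 0) - dot7 u v * (dot7 u v * dot7 c c - 0 * 0) +
   0 * (dot7 u v * 0 - dot7 v v * 0)) with (dot7 c c * (dot7 u u * dot7 v v - dot7 u v * dot7 u v)) by ring.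
  rewrite <- H4.
  assert (0 <= dot7 c c) by (unfold dot7; nra).
  rewrite sqrt_square by auto. apply Rabs_right; lra.
Qed.
Definition mk7 (a : R) (z1 z2 z3 : C) : nat -> R := fun k =>
  match k with 1 => a | 2 => Re z1 | 3 => Im z1 | 4 => Re z2 | 5 => Im z2
  | 6 => Re z3 | 7 => Im z3 | _ => 0 end.

Lemma key (w1 w2 w3 p1 p2 p3 q1 q2 q3 dw1 dw2 dw3 dp1 dp2 dp3 dq1 dq2 dq3 dr1 dr2 dr3 : C)
  (X Y dX dY dZ y1 y2 : R) :
  dw1 = (RtoC 2 * Cconj (w2 * w3))%C ->
  dw2 = (- (RtoC 2 * Cconj (w1 * w3)))%C ->
  dw3 = (- (RtoC 2 * Cconj (w1 * w2)))%C ->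
  dX = Im (Cconj w1 * p1 - Cconj w2 * p2 - Cconj w3 * p3)%C ->
  dY = Im (Cconj w1 * q1 - Cconj w2 * q2 - Cconj w3 * q3)%C ->
  dp1 = (Ci * RtoC X * w1 + Cconj (w2 * p3 + p2 * w3))%C ->
  dq1 = (Ci * RtoC Y * w1 + Cconj (w2 * q3 + q2 * w3))%C ->
  dp2 = (Ci * RtoC X * w2 - Cconj (w1 * p3 + p1 * w3))%C ->
  dq2 = (Ci * RtoC Y * w2 - Cconj (w1 * q3 + q1 * w3))%C ->
  dp3 = (Ci * RtoC X * w3 - Cconj (w2 * p1 + w1 * p2))%C ->
  dq3 = (Ci * RtoC Y * w3 - Cconj (w2 * q1 + w1 * q2))%C ->
  dZ = Im (Cconj p1 * q1 - Cconj p2 * q2 - Cconj p3 * q3)%C ->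
  dr1 = (Ci * RtoC X * p1 + Ci * RtoC Y * q1 + Cconj (p2 * p3) + Cconj (q2 * q3))%C ->
  dr2 = (Ci * RtoC X * p2 - Ci * RtoC Y * q2 - Cconj (p3 * p1) + Cconj (q3 * q1))%C ->
  dr3 = (Ci * RtoC X * q3 + Ci * RtoC Y * p3 - Cconj (p1 * q2) - Cconj (p2 * q1))%C ->
  forall k, (1 <= k <= 7)%nat ->
  mk7 (y1 * dY - y2 * dX + dZ)
      (RtoC ((y1 ^ 2 + y2 ^ 2) / 2) * dw1 + RtoC y1 * dp1 + RtoC y2 * dq1 + dr1)%C
      (RtoC ((y1 ^ 2 - y2 ^ 2) / 2) * dw2 + RtoC y1 * dp2 - RtoC y2 * dq2 + dr2)%C
      (RtoC (y1 * y2) * dw3 + RtoC y1 * dq3 + RtoC y2 * dp3 + dr3)%C k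
  = crossv (mk7 Y (RtoC y1 * w1 + p1) (RtoC y1 * w2 + p2) (RtoC y2 * w3 + q3))%C
           (mk7 (- X) (RtoC y2 * w1 + q1) (- (RtoC y2 * w2) - q2) (RtoC y1 * w3 + p3))%C k.
Proof.
  intros. subst.
  destruct w1, w2, w3, p1, p2, p3, q1, q2, q3.
  unfold crossv, phi, det3, ek, mk7.
  unfold Cmult, Cplus, Cminus, Copp, Cconj, RtoC, Ci, Re, Im; simpl.
  destruct k as [|[|[|[|[|[|[|[|k]]]]]]]]; try lia; simpl; field.
Qed.
Lemma sq_bound (a b : R) : Rabs a <= sqrt (Rabs a * (Rabs a * 1) + Rabs b * (Rabs b * 1)).
Proof.
  rewrite <- (sqrt_Rsqr (Rabs a)) at 1 by apply Rabs_pos.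
  apply sqrt_le_1_alt. unfold Rsqr. pose proof (Rabs_pos b). nra.
Qed.
Lemma lin_Re : is_linear (K:=R_AbsRing) (U:=C_R_NormedModule) (V:=R_NormedModule) (fun z : C => Re z).
Proof.
  split.
  - intros x y. reflexivity.
  - intros k x. destruct x. cbv -[Rmult Rplus Ropp Rminus]. ring.
  - exists 1. split. lra. intros x. rewrite Rmult_1_l. cbv [norm]. simpl. destruct x as [a b].
    unfold prod_norm, Re; simpl. apply sq_bound.
Qed.
Lemma lin_Im : is_linear (K:=R_AbsRing) (U:=C_R_NormedModule) (V:=R_NormedModule) (fun z : C => Im z).
Proof.
  split.
  - intros x y. reflexivity.
  - intros k x. destruct x. cbv -[Rmult Rplus Ropp Rminus]. ring.
  - exists 1. split. lra. intros x. rewrite Rmult_1_l. cbv [norm]. simpl. destruct x as [a b].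
    unfold prod_norm, Im; simpl. rewrite Rplus_comm. apply sq_bound.
Qed.
Lemma derive_Re (f : R -> C) t l : is_derive f t l -> is_derive (fun s => Re (f s)) t (Re l).
Proof.
  intros H. unfold is_derive in *.
  eapply filterdiff_ext_lin.
  apply (filterdiff_comp f (fun z => Re z) (fun y => scal y l) (fun z => Re z) H).
  apply filterdiff_linear, lin_Re.
  intros y. destruct l. cbv -[Rmult Rplus Ropp Rminus]. ring.
Qed.
Lemma derive_Im (f : R -> C) t l : is_derive f t l -> is_derive (fun s => Im (f s)) t (Im l).
Proof.
  intros H. unfold is_derive in *.
  eapply filterdiff_ext_lin.
  apply (filterdiff_comp f (fun z => Im z) (fun y => scal y l) (fun z => Im z) H).
  apply filterdiff_linear, lin_Im.
  intros y. destruct l. cbv -[Rmult Rplus Ropp Rminus]. ring.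
Qed.

Lemma cexpi_opp x : cexpi (- x) = (/ cexpi x)%C.
Proof.
  unfold cexpi, Cinv; cbn [fst snd]. rewrite cos_neg, sin_neg.
  replace (cos x ^ 2 + sin x ^ 2) with 1 by (rewrite <- (sin2_cos2 x); unfold Rsqr; ring).
  f_equal; field.
Qed.
Lemma cexpi_add x y : cexpi (x + y) = (cexpi x * cexpi y)%C.
Proof. unfold cexpi, Cmult; simpl. rewrite cos_plus, sin_plus. f_equal; ring. Qed.
Lemma cexpi_neq0 x : cexpi x <> 0%C.
Proof.
  unfold cexpi. intros H. injection H as H1 H2.
  pose proof (sin2_cos2 x). rewrite H1, H2 in H. unfold Rsqr in H. lra.
Qed.
Lemma conj_cexpi x : Cconj (cexpi x) = cexpi (- x).
Proof. unfold cexpi, Cconj; simpl. rewrite cos_neg, sin_neg. reflexivity. Qed.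
Lemma conj_RtoC r : Cconj (RtoC r) = RtoC r.
Proof. unfold Cconj, RtoC; simpl. f_equal; ring. Qed.
Lemma conj_Ci : Cconj Ci = (- Ci)%C.
Proof. unfold Cconj, Ci, Copp; simpl. f_equal; ring. Qed.
Lemma conj_conj z : Cconj (Cconj z) = z.
Proof. destruct z; unfold Cconj; simpl. f_equal; ring. Qed.
Lemma RtoC_2Re z : RtoC (2 * Re z) = (z + Cconj z)%C.
Proof. destruct z; unfold Cconj, RtoC, Cplus, Re; simpl. f_equal; ring. Qed.
Lemma RtoC2_neq0 : RtoC 2 <> 0%C.
Proof. intros H. injection H. lra. Qed.
Lemma Ci2 : (Ci ^ 2 = - RtoC 1)%C.
Proof. cbv -[Rmult Rplus Ropp Rminus Rinv IZR]. f_equal; ring. Qed.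
Lemma Ci3 : (Ci ^ 3 = - Ci)%C.
Proof. cbv -[Rmult Rplus Ropp Rminus Rinv IZR]. f_equal; ring. Qed.
Lemma Ci4 : (Ci ^ 4 = RtoC 1)%C.
Proof. cbv -[Rmult Rplus Ropp Rminus Rinv IZR]. f_equal; ring. Qed.
Lemma Ci_neq0 : Ci <> 0%C.
Proof. intros H. injection H. lra. Qed.
Lemma Ceq_diff (x y z : C) : (x - y = z)%C -> z = 0%C -> x = y.
Proof. intros H1 H2. rewrite H2 in H1. replace x with ((x - y) + y)%C by ring. rewrite H1. ring. Qed.

Local Open Scope C_scope.
Definition dcexpi (w th : R) : C := Ci * RtoC w * cexpi th.
Definition Dp1 (a1 lam : R) (b d : nat -> R) (B D : C) (t : R) : CC :=
  Ci * dcexpi a1 (a1 * t) *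
  (B * RtoC (b 2%nat) * cexpi (lam * t / 2) + Cconj B * RtoC (b 4%nat) * cexpi (- (lam * t / 2))
   + D * RtoC (d 1%nat) * cexpi (3 * lam * t / 2) + Cconj D * RtoC (d 4%nat) * cexpi (- (3 * lam * t / 2)))
 + Ci * cexpi (a1 * t) *
  (B * RtoC (b 2%nat) * dcexpi (lam/2) (lam * t / 2) + Cconj B * RtoC (b 4%nat) * dcexpi (-(lam/2)) (- (lam * t / 2))
   + D * RtoC (d 1%nat) * dcexpi (3*lam/2) (3 * lam * t / 2) + Cconj D * RtoC (d 4%nat) * dcexpi (-(3*lam/2)) (- (3 * lam * t / 2))).
Local Close Scope C_scope.

Definition res (T : nat -> nat -> R) (mu : R) (v : nat -> R) (i : nat) : R := mv T v i - mu * v i.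

Lemma cexpi_a1 a1 a2 a3 t : a1 + a2 + a3 = 0 -> cexpi (a1 * t) = (/ (cexpi (a2 * t) * cexpi (a3 * t)))%C.
Proof.
  intros H. replace (a1 * t) with (- (a2 * t + a3 * t)) by (replace a1 with (-(a2+a3)) by lra; ring).
  rewrite cexpi_opp, cexpi_add. reflexivity.
Qed.

Ltac pushC := repeat first
  [ rewrite Cmult_conj | rewrite Cplus_conj | rewrite Cminus_conj | rewrite Copp_conj
  | rewrite conj_RtoC | rewrite conj_Ci | rewrite conj_conj | rewrite conj_cexpi
  | rewrite Cdiv_conj by apply RtoC2_neq0 ].
Ltac pushR := repeat first
  [ rewrite RtoC_plus | rewrite RtoC_mult | rewrite RtoC_minus | rewrite RtoC_opp
  | rewrite RtoC_inv by lra ].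

Lemma ode_p1 (al1 al2 al3 a1 a2 a3 lam : R) b c d B C D t :
  a1 + a2 + a3 = 0 ->
  let T := Tmat al1 al2 al3 a1 a2 a3 in
  let E1 := cexpi (a1 * t) in
  let F := cexpi (lam * t / 2) in let G := cexpi (- (lam * t / 2)) in
  let F3 := cexpi (3 * lam * t / 2) in let G3 := cexpi (- (3 * lam * t / 2)) in
  (Dp1 a1 lam b d B D t - (Ci * RtoC (xfun lam b c B C t) * w1fun al1 a1 t
     + Cconj (w2fun al2 a2 t * p3fun a3 lam b c d B C D t + p2fun a2 lam c d C D t * w3fun al3 a3 t)))%C
  = (E1 / RtoC 2 * (B * F * RtoC (res T lam (bplus b) 2) + Cconj B * G * RtoC (res T (-lam) (bminus b) 2)
       + C * F * RtoC (res T lam (cplus c) 2) + Cconj C * G * RtoC (res T (-lam) (cminus c) 2)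
       + D * F3 * RtoC (res T (3*lam) (dplus d) 2) + Cconj D * G3 * RtoC (res T (-(3*lam)) (dminus d) 2)))%C.
Proof.
  intros Ha T E1 F G F3 G3.
  unfold xfun. rewrite RtoC_2Re.
  unfold Dp1, dcexpi, w1fun, w2fun, w3fun, p2fun, p3fun, E1, F, G, F3, G3.
  cbv [res T mv Tmat bplus bminus cplus cminus dplus dminus]. pushC. rewrite !Ropp_involutive.
  rewrite !cexpi_opp. rewrite !(cexpi_a1 a1 a2 a3 t Ha).
  unfold Rdiv. pushR.
  clearbody T E1 F G F3 G3. clear T E1 F G F3 G3.
  field_simplify_eq.
  - rewrite ?Ci2, ?Ci3, ?Ci4. ring.
  - repeat split; try apply cexpi_neq0; try apply RtoC2_neq0.
Qed.

Local Open Scope C_scope.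
Definition Dp2 (a2 lam : R) (c d : nat -> R) (C D : CC) (t : R) : CC :=
  dcexpi a2 (a2 * t) *
  (C * RtoC (c 2%nat) * cexpi (lam * t / 2) + Cconj C * RtoC (c 4%nat) * cexpi (- (lam * t / 2))
   + D * RtoC (d 2%nat) * cexpi (3 * lam * t / 2) + Cconj D * RtoC (d 5%nat) * cexpi (- (3 * lam * t / 2)))
 + cexpi (a2 * t) *
  (C * RtoC (c 2%nat) * dcexpi (lam/2) (lam * t / 2) + Cconj C * RtoC (c 4%nat) * dcexpi (-(lam/2)) (- (lam * t / 2))
   + D * RtoC (d 2%nat) * dcexpi (3*lam/2) (3 * lam * t / 2) + Cconj D * RtoC (d 5%nat) * dcexpi (-(3*lam/2)) (- (3 * lam * t / 2))).
Definition Dp3 (a3 lam : R) (b c d : nat -> R) (B C D : CC) (t : R) : CC :=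
  dcexpi a3 (a3 * t) *
  ((B * RtoC (b 3%nat) + C * RtoC (c 3%nat)) * cexpi (lam * t / 2)
   + (Cconj B * RtoC (b 5%nat) + Cconj C * RtoC (c 5%nat)) * cexpi (- (lam * t / 2))
   + D * RtoC (d 3%nat) * cexpi (3 * lam * t / 2) + Cconj D * RtoC (d 6%nat) * cexpi (- (3 * lam * t / 2)))
 + cexpi (a3 * t) *
  ((B * RtoC (b 3%nat) + C * RtoC (c 3%nat)) * dcexpi (lam/2) (lam * t / 2)
   + (Cconj B * RtoC (b 5%nat) + Cconj C * RtoC (c 5%nat)) * dcexpi (-(lam/2)) (- (lam * t / 2))
   + D * RtoC (d 3%nat) * dcexpi (3*lam/2) (3 * lam * t / 2) + Cconj D * RtoC (d 6%nat) * dcexpi (-(3*lam/2)) (- (3 * lam * t / 2))).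
Definition Dw1 (al1 a1 t : R) : C := Ci * RtoC al1 * dcexpi a1 (a1 * t) / RtoC 2.
Definition Dw2 (al2 a2 t : R) : C := RtoC al2 * dcexpi a2 (a2 * t) / RtoC 2.
Definition Dw3 (al3 a3 t : R) : C := RtoC al3 * dcexpi a3 (a3 * t) / RtoC 2.
Local Close Scope C_scope.
Definition Dx (lam : R) (b c : nat -> R) (B C : CC) (t : R) : R :=
  2 * Re ((B * RtoC (b 1%nat) + C * RtoC (c 1%nat)) * dcexpi (lam / 2) (lam * t / 2))%C.

Ltac ode_tac Ha :=
  cbv [res mv Tmat bplus bminus cplus cminus dplus dminus]; pushC;
  rewrite ?Ropp_involutive, ?cexpi_opp, ?(cexpi_a1 _ _ _ _ Ha);
  unfold Rdiv; pushR;
  field_simplify_eq;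
  [ rewrite ?Ci2, ?Ci3, ?Ci4; ring
  | repeat split; try apply cexpi_neq0; try apply RtoC2_neq0 ].

Lemma ode_p2 (al1 al2 al3 a1 a2 a3 lam : R) b c d B C D t :
  a1 + a2 + a3 = 0 ->
  let T := Tmat al1 al2 al3 a1 a2 a3 in
  let E2 := cexpi (a2 * t) in
  let F := cexpi (lam * t / 2) in let G := cexpi (- (lam * t / 2)) in
  let F3 := cexpi (3 * lam * t / 2) in let G3 := cexpi (- (3 * lam * t / 2)) in
  (Dp2 a2 lam c d C D t - (Ci * RtoC (xfun lam b c B C t) * w2fun al2 a2 t
     - Cconj (w1fun al1 a1 t * p3fun a3 lam b c d B C D t + p1fun a1 lam b d B D t * w3fun al3 a3 t)))%C
  = (- (Ci * E2 / RtoC 2) * (B * F * RtoC (res T lam (bplus b) 3) + Cconj B * G * RtoC (res T (-lam) (bminus b) 3)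
       + C * F * RtoC (res T lam (cplus c) 3) + Cconj C * G * RtoC (res T (-lam) (cminus c) 3)
       + D * F3 * RtoC (res T (3*lam) (dplus d) 3) + Cconj D * G3 * RtoC (res T (-(3*lam)) (dminus d) 3)))%C.
Proof.
  intros Ha T E2 F G F3 G3.
  unfold xfun. rewrite RtoC_2Re.
  unfold Dp2, dcexpi, w1fun, w2fun, w3fun, p1fun, p3fun, E2, F, G, F3, G3, T.
  ode_tac Ha.
Qed.

Lemma ode_p3 (al1 al2 al3 a1 a2 a3 lam : R) b c d B C D t :
  a1 + a2 + a3 = 0 ->
  let T := Tmat al1 al2 al3 a1 a2 a3 in
  let E3 := cexpi (a3 * t) in
  let F := cexpi (lam * t / 2) in let G := cexpi (- (lam * t / 2)) in
  let F3 := cexpi (3 * lam * t / 2) in let G3 := cexpi (- (3 * lam * t / 2)) in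
  (Dp3 a3 lam b c d B C D t - (Ci * RtoC (xfun lam b c B C t) * w3fun al3 a3 t
     - Cconj (w2fun al2 a2 t * p1fun a1 lam b d B D t + w1fun al1 a1 t * p2fun a2 lam c d C D t)))%C
  = (- (Ci * E3 / RtoC 2) * (B * F * RtoC (res T lam (bplus b) 4) + Cconj B * G * RtoC (res T (-lam) (bminus b) 4)
       + C * F * RtoC (res T lam (cplus c) 4) + Cconj C * G * RtoC (res T (-lam) (cminus c) 4)
       + D * F3 * RtoC (res T (3*lam) (dplus d) 4) + Cconj D * G3 * RtoC (res T (-(3*lam)) (dminus d) 4)))%C.
Proof.
  intros Ha T E3 F G F3 G3.
  unfold xfun. rewrite RtoC_2Re.
  unfold Dp3, dcexpi, w1fun, w2fun, w3fun, p1fun, p2fun, E3, F, G, F3, G3, T.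
  ode_tac Ha.
Qed.

Lemma ode_x (al1 al2 al3 a1 a2 a3 lam : R) b c d B C D t :
  a1 + a2 + a3 = 0 ->
  let T := Tmat al1 al2 al3 a1 a2 a3 in
  let F := cexpi (lam * t / 2) in let G := cexpi (- (lam * t / 2)) in
  let F3 := cexpi (3 * lam * t / 2) in let G3 := cexpi (- (3 * lam * t / 2)) in
  (RtoC (Dx lam b c B C t) - RtoC (Im (Cconj (w1fun al1 a1 t) * p1fun a1 lam b d B D t
      - Cconj (w2fun al2 a2 t) * p2fun a2 lam c d C D t - Cconj (w3fun al3 a3 t) * p3fun a3 lam b c d B C D t)))%C
  = (- (Ci / RtoC 2) * (B * F * RtoC (res T lam (bplus b) 1) + Cconj B * G * RtoC (res T (-lam) (bminus b) 1)
       + C * F * RtoC (res T lam (cplus c) 1) + Cconj C * G * RtoC (res T (-lam) (cminus c) 1)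
       + D * F3 * RtoC (res T (3*lam) (dplus d) 1) + Cconj D * G3 * RtoC (res T (-(3*lam)) (dminus d) 1)))%C.
Proof.
  intros Ha T F G F3 G3.
  unfold Dx. rewrite RtoC_2Re, im_alt.
  unfold dcexpi, w1fun, w2fun, w3fun, p1fun, p2fun, p3fun, F, G, F3, G3, T.
  cbv [res mv Tmat bplus bminus cplus cminus dplus dminus]; pushC;
  rewrite ?Ropp_involutive, ?cexpi_opp, ?(cexpi_a1 _ _ _ _ Ha);
  unfold Rdiv; pushR.
  field_simplify_eq;
  [ rewrite ?Ci2, ?Ci3, ?Ci4; ring
  | repeat split; try apply cexpi_neq0; try apply RtoC2_neq0; apply Ci_neq0 ].
Qed.

Lemma ode_w1 al1 al2 al3 a1 a2 a3 t : a1 + a2 + a3 = 0 ->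
  (Dw1 al1 a1 t - RtoC 2 * Cconj (w2fun al2 a2 t * w3fun al3 a3 t))%C
  = (- (cexpi (a1 * t) / RtoC 2) * RtoC (al1 * a1 + al2 * al3))%C.
Proof.
  intros Ha. unfold Dw1, w2fun, w3fun, dcexpi. pushC.
  rewrite ?Ropp_involutive, ?cexpi_opp, ?(cexpi_a1 _ _ _ _ Ha);
  unfold Rdiv; pushR.
  field_simplify_eq;
  [ rewrite ?Ci2, ?Ci3, ?Ci4; ring
  | repeat split; try apply cexpi_neq0; try apply RtoC2_neq0; apply Ci_neq0 ].
Qed.
Lemma ode_w2 al1 al2 al3 a1 a2 a3 t : a1 + a2 + a3 = 0 ->
  (Dw2 al2 a2 t - - (RtoC 2 * Cconj (w1fun al1 a1 t * w3fun al3 a3 t)))%C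
  = (Ci * cexpi (a2 * t) / RtoC 2 * RtoC (al2 * a2 - al1 * al3))%C.
Proof.
  intros Ha. unfold Dw2, w1fun, w3fun, dcexpi. pushC.
  rewrite ?Ropp_involutive, ?cexpi_opp, ?(cexpi_a1 _ _ _ _ Ha);
  unfold Rdiv; pushR.
  field_simplify_eq;
  [ rewrite ?Ci2, ?Ci3, ?Ci4; ring
  | repeat split; try apply cexpi_neq0; try apply RtoC2_neq0; apply Ci_neq0 ].
Qed.
Lemma ode_w3 al1 al2 al3 a1 a2 a3 t : a1 + a2 + a3 = 0 ->
  (Dw3 al3 a3 t - - (RtoC 2 * Cconj (w1fun al1 a1 t * w2fun al2 a2 t)))%C
  = (Ci * cexpi (a3 * t) / RtoC 2 * RtoC (al3 * a3 - al1 * al2))%C.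
Proof.
  intros Ha. unfold Dw3, w1fun, w2fun, dcexpi. pushC.
  rewrite ?Ropp_involutive, ?cexpi_opp, ?(cexpi_a1 _ _ _ _ Ha);
  unfold Rdiv; pushR.
  field_simplify_eq;
  [ rewrite ?Ci2, ?Ci3, ?Ci4; ring
  | repeat split; try apply cexpi_neq0; try apply RtoC2_neq0; apply Ci_neq0 ].
Qed.

Ltac der_tac := unfold dcexpi, cexpi, Cdiv, Cinv, Cmult, Cplus, Cconj, RtoC, Ci, Re, Im; simpl;
  unfold Rdiv; auto_derive; [exact I | field].

Lemma der_p1 a1 lam b d B D t :
  is_derive (fun s => Re (p1fun a1 lam b d B D s)) t (Re (Dp1 a1 lam b d B D t)) /\
  is_derive (fun s => Im (p1fun a1 lam b d B D s)) t (Im (Dp1 a1 lam b d B D t)).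
Proof. destruct B, D. unfold p1fun, Dp1. split; der_tac. Qed.
Lemma der_p2 a2 lam c d C D t :
  is_derive (fun s => Re (p2fun a2 lam c d C D s)) t (Re (Dp2 a2 lam c d C D t)) /\
  is_derive (fun s => Im (p2fun a2 lam c d C D s)) t (Im (Dp2 a2 lam c d C D t)).
Proof. destruct C, D. unfold p2fun, Dp2. split; der_tac. Qed.
Lemma der_p3 a3 lam b c d B C D t :
  is_derive (fun s => Re (p3fun a3 lam b c d B C D s)) t (Re (Dp3 a3 lam b c d B C D t)) /\
  is_derive (fun s => Im (p3fun a3 lam b c d B C D s)) t (Im (Dp3 a3 lam b c d B C D t)).
Proof. destruct B, C, D. unfold p3fun, Dp3. split; der_tac. Qed.
Lemma der_w1 al1 a1 t :
  is_derive (fun s => Re (w1fun al1 a1 s)) t (Re (Dw1 al1 a1 t)) /\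
  is_derive (fun s => Im (w1fun al1 a1 s)) t (Im (Dw1 al1 a1 t)).
Proof. unfold w1fun, Dw1. split; der_tac. Qed.
Lemma der_w2 al2 a2 t :
  is_derive (fun s => Re (w2fun al2 a2 s)) t (Re (Dw2 al2 a2 t)) /\
  is_derive (fun s => Im (w2fun al2 a2 s)) t (Im (Dw2 al2 a2 t)).
Proof. unfold w2fun, Dw2. split; der_tac. Qed.
Lemma der_w3 al3 a3 t :
  is_derive (fun s => Re (w3fun al3 a3 s)) t (Re (Dw3 al3 a3 t)) /\
  is_derive (fun s => Im (w3fun al3 a3 s)) t (Im (Dw3 al3 a3 t)).
Proof. unfold w3fun, Dw3. split; der_tac. Qed.
Lemma der_x lam b c B C t :
  is_derive (fun s => xfun lam b c B C s) t (Dx lam b c B C t).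
Proof. destruct B, C. unfold xfun, Dx. der_tac. Qed.
Lemma lin4 (f1 f2 f3 f4 : R -> R) c1 c2 c3 d1 d2 d3 d4 t :
  is_derive f1 t d1 -> is_derive f2 t d2 -> is_derive f3 t d3 -> is_derive f4 t d4 ->
  is_derive (fun s => c1 * f1 s + c2 * f2 s + c3 * f3 s + f4 s) t (c1 * d1 + c2 * d2 + c3 * d3 + d4).
Proof.
  intros H1 H2 H3 H4.
  apply (is_derive_plus (fun s => c1 * f1 s + c2 * f2 s + c3 * f3 s) f4); [|exact H4].
  apply (is_derive_plus (fun s => c1 * f1 s + c2 * f2 s) (fun s => c3 * f3 s)).
  apply (is_derive_plus (fun s => c1 * f1 s) (fun s => c2 * f2 s)).
  all: apply is_derive_scal; assumption.
Qed.

Lemma Mmap_d1 X Y Z W1 W2 W3 P1 P2 P3 Q1 Q2 Q3 R1 R2 R3 s1 s2 t k : (1 <= k <= 7)%nat ->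
  is_derive (fun s => Mmap X Y Z W1 W2 W3 P1 P2 P3 Q1 Q2 Q3 R1 R2 R3 s s2 t k) s1
    (mk7 (Y t) (RtoC s1 * W1 t + P1 t) (RtoC s1 * W2 t + P2 t) (RtoC s2 * W3 t + Q3 t) k)%C.
Proof.
  intros Hk. unfold Mmap, mk7.
  destruct (W1 t), (W2 t), (W3 t), (P1 t), (P2 t), (P3 t), (Q1 t), (Q2 t), (Q3 t), (R1 t), (R2 t), (R3 t).
  destruct k as [|[|[|[|[|[|[|[|k]]]]]]]]; try lia;
  unfold Re, Im, Cmult, Cplus, Cminus, Copp, RtoC; simpl; auto_derive; try exact I; field.
Qed.
Lemma Mmap_d2 X Y Z W1 W2 W3 P1 P2 P3 Q1 Q2 Q3 R1 R2 R3 s1 s2 t k : (1 <= k <= 7)%nat ->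
  is_derive (fun s => Mmap X Y Z W1 W2 W3 P1 P2 P3 Q1 Q2 Q3 R1 R2 R3 s1 s t k) s2
    (mk7 (- X t) (RtoC s2 * W1 t + Q1 t) (- (RtoC s2 * W2 t) - Q2 t) (RtoC s1 * W3 t + P3 t) k)%C.
Proof.
  intros Hk. unfold Mmap, mk7.
  destruct (W1 t), (W2 t), (W3 t), (P1 t), (P2 t), (P3 t), (Q1 t), (Q2 t), (Q3 t), (R1 t), (R2 t), (R3 t).
  destruct k as [|[|[|[|[|[|[|[|k]]]]]]]]; try lia;
  unfold Re, Im, Cmult, Cplus, Cminus, Copp, RtoC; simpl; auto_derive; try exact I; field.
Qed.

Lemma d_eq (f : R -> R) t l l' : is_derive f t l -> l = l' -> is_derive f t l'.
Proof. intros H E; subst; exact H. Qed.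

Definition cder (f : R -> C) (t : R) (l : C) : Prop :=
  is_derive (fun s => Re (f s)) t (Re l) /\ is_derive (fun s => Im (f s)) t (Im l).

Lemma Mmap_dt X Y Z W1 W2 W3 P1 P2 P3 Q1 Q2 Q3 R1 R2 R3 s1 s2 t
  dX dY dZ dW1 dW2 dW3 dP1 dP2 dP3 dQ1 dQ2 dQ3 dR1 dR2 dR3 k :
  is_derive X t dX -> is_derive Y t dY -> is_derive Z t dZ ->
  cder W1 t dW1 -> cder W2 t dW2 -> cder W3 t dW3 ->
  cder P1 t dP1 -> cder P2 t dP2 -> cder P3 t dP3 ->
  cder Q1 t dQ1 -> cder Q2 t dQ2 -> cder Q3 t dQ3 ->
  cder R1 t dR1 -> cder R2 t dR2 -> cder R3 t dR3 ->
  (1 <= k <= 7)%nat ->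
  is_derive (fun s => Mmap X Y Z W1 W2 W3 P1 P2 P3 Q1 Q2 Q3 R1 R2 R3 s1 s2 s k) t
    (mk7 (s1 * dY - s2 * dX + dZ)
      (RtoC ((s1 ^ 2 + s2 ^ 2) / 2) * dW1 + RtoC s1 * dP1 + RtoC s2 * dQ1 + dR1)
      (RtoC ((s1 ^ 2 - s2 ^ 2) / 2) * dW2 + RtoC s1 * dP2 - RtoC s2 * dQ2 + dR2)
      (RtoC (s1 * s2) * dW3 + RtoC s1 * dQ3 + RtoC s2 * dP3 + dR3) k)%C.
Proof.
  intros HX HY HZ [W1r W1i] [W2r W2i] [W3r W3i] [P1r P1i] [P2r P2i] [P3r P3i]
    [Q1r Q1i] [Q2r Q2i] [Q3r Q3i] [R1r R1i] [R2r R2i] [R3r R3i] Hk.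
  unfold Mmap, mk7.
  destruct k as [|[|[|[|[|[|[|[|k]]]]]]]]; try lia.
  - apply (is_derive_plus (fun s => s1 * Y s - s2 * X s) Z); [|exact HZ].
    apply (is_derive_minus (fun s => s1 * Y s) (fun s => s2 * X s));
    apply is_derive_scal; assumption.
  - apply (is_derive_ext (fun s => ((s1 ^ 2 + s2 ^ 2) / 2) * Re (W1 s) + s1 * Re (P1 s) + s2 * Re (Q1 s) + Re (R1 s))).
    { intros s. destruct (W1 s), (P1 s), (Q1 s), (R1 s). unfold Re, Im, Cmult, Cplus, Cminus, Copp, RtoC; simpl; ring. }
    eapply d_eq. apply (lin4 (fun s => Re (W1 s)) (fun s => Re (P1 s)) (fun s => Re (Q1 s)) (fun s => Re (R1 s))); eassumption.
    destruct dW1, dP1, dQ1, dR1. unfold Re, Im, Cmult, Cplus, Cminus, Copp, RtoC; simpl; ring.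
  - apply (is_derive_ext (fun s => ((s1 ^ 2 + s2 ^ 2) / 2) * Im (W1 s) + s1 * Im (P1 s) + s2 * Im (Q1 s) + Im (R1 s))).
    { intros s. destruct (W1 s), (P1 s), (Q1 s), (R1 s). unfold Re, Im, Cmult, Cplus, Cminus, Copp, RtoC; simpl; ring. }
    eapply d_eq. apply (lin4 (fun s => Im (W1 s)) (fun s => Im (P1 s)) (fun s => Im (Q1 s)) (fun s => Im (R1 s))); eassumption.
    destruct dW1, dP1, dQ1, dR1. unfold Re, Im, Cmult, Cplus, Cminus, Copp, RtoC; simpl; ring.
  - apply (is_derive_ext (fun s => ((s1 ^ 2 - s2 ^ 2) / 2) * Re (W2 s) + s1 * Re (P2 s) + (- s2) * Re (Q2 s) + Re (R2 s))).
    { intros s. destruct (W2 s), (P2 s), (Q2 s), (R2 s). unfold Re, Im, Cmult, Cplus, Cminus, Copp, RtoC; simpl; ring. }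
    eapply d_eq. apply (lin4 (fun s => Re (W2 s)) (fun s => Re (P2 s)) (fun s => Re (Q2 s)) (fun s => Re (R2 s))); eassumption.
    destruct dW2, dP2, dQ2, dR2. unfold Re, Im, Cmult, Cplus, Cminus, Copp, RtoC; simpl; ring.
  - apply (is_derive_ext (fun s => ((s1 ^ 2 - s2 ^ 2) / 2) * Im (W2 s) + s1 * Im (P2 s) + (- s2) * Im (Q2 s) + Im (R2 s))).
    { intros s. destruct (W2 s), (P2 s), (Q2 s), (R2 s). unfold Re, Im, Cmult, Cplus, Cminus, Copp, RtoC; simpl; ring. }
    eapply d_eq. apply (lin4 (fun s => Im (W2 s)) (fun s => Im (P2 s)) (fun s => Im (Q2 s)) (fun s => Im (R2 s))); eassumption.
    destruct dW2, dP2, dQ2, dR2. unfold Re, Im, Cmult, Cplus, Cminus, Copp, RtoC; simpl; ring.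
  - apply (is_derive_ext (fun s => (s1 * s2) * Re (W3 s) + s1 * Re (Q3 s) + s2 * Re (P3 s) + Re (R3 s))).
    { intros s. destruct (W3 s), (Q3 s), (P3 s), (R3 s). unfold Re, Im, Cmult, Cplus, Cminus, Copp, RtoC; simpl; ring. }
    eapply d_eq. apply (lin4 (fun s => Re (W3 s)) (fun s => Re (Q3 s)) (fun s => Re (P3 s)) (fun s => Re (R3 s))); eassumption.
    destruct dW3, dQ3, dP3, dR3. unfold Re, Im, Cmult, Cplus, Cminus, Copp, RtoC; simpl; ring.
  - apply (is_derive_ext (fun s => (s1 * s2) * Im (W3 s) + s1 * Im (Q3 s) + s2 * Im (P3 s) + Im (R3 s))).
    { intros s. destruct (W3 s), (Q3 s), (P3 s), (R3 s). unfold Re, Im, Cmult, Cplus, Cminus, Copp, RtoC; simpl; ring. }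
    eapply d_eq. apply (lin4 (fun s => Im (W3 s)) (fun s => Im (Q3 s)) (fun s => Im (P3 s)) (fun s => Im (R3 s))); eassumption.
    destruct dW3, dQ3, dP3, dR3. unfold Re, Im, Cmult, Cplus, Cminus, Copp, RtoC; simpl; ring.
Qed.

Lemma res0 T mu v i : eigvec T mu v -> res T mu v i = 0.
Proof. intros [_ H]. unfold res. rewrite H. ring. Qed.

Lemma rsum0 T lam b c d i (B C D F G F3 G3 K : CC) :
  eigvec T lam (bplus b) -> eigvec T (- lam) (bminus b) ->
  eigvec T lam (cplus c) -> eigvec T (- lam) (cminus c) ->
  eigvec T (3 * lam) (dplus d) -> eigvec T (- (3 * lam)) (dminus d) ->
  (K * (B * F * RtoC (res T lam (bplus b) i) + Cconj B * G * RtoC (res T (-lam) (bminus b) i)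
       + C * F * RtoC (res T lam (cplus c) i) + Cconj C * G * RtoC (res T (-lam) (cminus c) i)
       + D * F3 * RtoC (res T (3*lam) (dplus d) i) + Cconj D * G3 * RtoC (res T (-(3*lam)) (dminus d) i)))%C = 0%C.
Proof.
  intros H1 H2 H3 H4 H5 H6.
  rewrite (res0 _ _ _ i H1), (res0 _ _ _ i H2), (res0 _ _ _ i H3), (res0 _ _ _ i H4),
    (res0 _ _ _ i H5), (res0 _ _ _ i H6). ring.
Qed.

Lemma deriv_eq (f : R -> R) t l1 l2 : is_derive f t l1 -> is_derive f t l2 -> l1 = l2.
Proof. intros H1 H2. rewrite <- (is_derive_unique _ _ _ H1). apply is_derive_unique; exact H2. Qed.

Lemma phi_vol_ext (u v w u' v' w' : nat -> R) :
  (forall k, (1 <= k <= 7)%nat -> u k = u' k) ->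
  (forall k, (1 <= k <= 7)%nat -> v k = v' k) ->
  (forall k, (1 <= k <= 7)%nat -> w k = w' k) ->
  phi u v w = phi u' v' w' /\ vol3 u v w = vol3 u' v' w'.
Proof.
  intros Hu Hv Hw. unfold phi, det3, vol3, dot7.
  rewrite !Hu, !Hv, !Hw by lia. split; reflexivity.
Qed.

Lemma cder_of (f : R -> CC) t l : is_derive f t l -> cder f t l.
Proof. intros H. split; [apply derive_Re | apply derive_Im]; exact H. Qed.

Lemma a_sum (al1 al2 al3 : R) : 0 < al1 -> 0 < al2 -> 0 < al3 ->
  / al1 ^ 2 = / al2 ^ 2 + / al3 ^ 2 ->
  - (al2 * al3 / al1) + al3 * al1 / al2 + al1 * al2 / al3 = 0.
Proof.
  intros H1 H2 H3 H.
  assert (K : al1 ^ 2 * (al2 ^ 2 + al3 ^ 2) = al2 ^ 2 * al3 ^ 2).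
  { replace (al2 ^ 2 + al3 ^ 2) with ((/ al2 ^ 2 + / al3 ^ 2) * (al2 ^ 2 * al3 ^ 2))
      by (field; lra).
    rewrite <- H. field. lra. }
  replace (- (al2 * al3 / al1) + al3 * al1 / al2 + al1 * al2 / al3)
    with ((al1 ^ 2 * (al2 ^ 2 + al3 ^ 2) - al2 ^ 2 * al3 ^ 2) / (al1 * al2 * al3))
    by (field; lra).
  rewrite K. unfold Rdiv. ring.
Qed.

Theorem theorem5p6
  (al1 al2 al3 lam : R) (b c d : nat -> R) (B C D B' C' D' : CC)
  (z : R -> R) (r1 r2 r3 : R -> CC) :
  0 < al1 -> 0 < al2 -> 0 < al3 ->
  / al1 ^ 2 = / al2 ^ 2 + / al3 ^ 2 ->
  let a1 := - (al2 * al3 / al1) in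
  let a2 := al3 * al1 / al2 in
  let a3 := al1 * al2 / al3 in
  0 < lam -> lam ^ 2 = a2 ^ 2 - a1 * a3 ->
  let T := Tmat al1 al2 al3 a1 a2 a3 in
  eigvec T lam (bplus b) -> eigvec T (- lam) (bminus b) ->
  eigvec T lam (cplus c) -> eigvec T (- lam) (cminus c) ->
  eigvec T (3 * lam) (dplus d) -> eigvec T (- (3 * lam)) (dminus d) ->
  let x := xfun lam b c B C in
  let p1 := p1fun a1 lam b d B D in
  let p2 := p2fun a2 lam c d C D in
  let p3 := p3fun a3 lam b c d B C D in
  let y := xfun lam b c B' C' in
  let q1 := p1fun a1 lam b d B' D' in
  let q2 := p2fun a2 lam c d C' D' in
  let q3 := p3fun a3 lam b c d B' C' D' in
  (forall t, is_derive z t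
     (Im (Cconj (p1 t) * q1 t - Cconj (p2 t) * q2 t - Cconj (p3 t) * q3 t)%C)) ->
  (forall t, is_derive r1 t
     (Ci * RtoC (x t) * p1 t + Ci * RtoC (y t) * q1 t
      + Cconj (p2 t * p3 t) + Cconj (q2 t * q3 t))%C) ->
  (forall t, is_derive r2 t
     (Ci * RtoC (x t) * p2 t - Ci * RtoC (y t) * q2 t
      - Cconj (p3 t * p1 t) + Cconj (q3 t * q1 t))%C) ->
  (forall t, is_derive r3 t
     (Ci * RtoC (x t) * q3 t + Ci * RtoC (y t) * p3 t
      - Cconj (p1 t * q2 t) - Cconj (p2 t * q1 t))%C) ->
  associative_where_nonsingular
    (Mmap x y z (w1fun al1 a1) (w2fun al2 a2) (w3fun al3 a3)
       p1 p2 p3 q1 q2 q3 r1 r2 r3).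
Proof.
  intros H1 H2 H3 Hal a1 a2 a3 Hlam Hlam2 T Hbp Hbm Hcp Hcm Hdp Hdm
    x p1 p2 p3 y q1 q2 q3 Hz Hr1 Hr2 Hr3.
  intros s1 s2 t u v w Hu Hv Hw _.
  assert (Ha : a1 + a2 + a3 = 0) by (apply a_sum; assumption).
  assert (Hw1 : al1 * a1 + al2 * al3 = 0) by (unfold a1; field; lra).
  assert (Hw2 : al2 * a2 - al1 * al3 = 0) by (unfold a2; field; lra).
  assert (Hw3 : al3 * a3 - al1 * al2 = 0) by (unfold a3; field; lra).
  assert (Ep1 := Ceq_diff _ _ _ (ode_p1 al1 al2 al3 a1 a2 a3 lam b c d B C D t Ha)
                  (rsum0 _ _ _ _ _ _ _ _ _ _ _ _ _ _ Hbp Hbm Hcp Hcm Hdp Hdm)).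
  assert (Eq1 := Ceq_diff _ _ _ (ode_p1 al1 al2 al3 a1 a2 a3 lam b c d B' C' D' t Ha)
                  (rsum0 _ _ _ _ _ _ _ _ _ _ _ _ _ _ Hbp Hbm Hcp Hcm Hdp Hdm)).
  assert (Ep2 := Ceq_diff _ _ _ (ode_p2 al1 al2 al3 a1 a2 a3 lam b c d B C D t Ha)
                  (rsum0 _ _ _ _ _ _ _ _ _ _ _ _ _ _ Hbp Hbm Hcp Hcm Hdp Hdm)).
  assert (Eq2 := Ceq_diff _ _ _ (ode_p2 al1 al2 al3 a1 a2 a3 lam b c d B' C' D' t Ha)
                  (rsum0 _ _ _ _ _ _ _ _ _ _ _ _ _ _ Hbp Hbm Hcp Hcm Hdp Hdm)).
  assert (Ep3 := Ceq_diff _ _ _ (ode_p3 al1 al2 al3 a1 a2 a3 lam b c d B C D t Ha)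
                  (rsum0 _ _ _ _ _ _ _ _ _ _ _ _ _ _ Hbp Hbm Hcp Hcm Hdp Hdm)).
  assert (Eq3 := Ceq_diff _ _ _ (ode_p3 al1 al2 al3 a1 a2 a3 lam b c d B' C' D' t Ha)
                  (rsum0 _ _ _ _ _ _ _ _ _ _ _ _ _ _ Hbp Hbm Hcp Hcm Hdp Hdm)).
  assert (Ex := Ceq_diff _ _ _ (ode_x al1 al2 al3 a1 a2 a3 lam b c d B C D t Ha)
                  (rsum0 _ _ _ _ _ _ _ _ _ _ _ _ _ _ Hbp Hbm Hcp Hcm Hdp Hdm)).
  assert (Ey := Ceq_diff _ _ _ (ode_x al1 al2 al3 a1 a2 a3 lam b c d B' C' D' t Ha)
                  (rsum0 _ _ _ _ _ _ _ _ _ _ _ _ _ _ Hbp Hbm Hcp Hcm Hdp Hdm)).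
  apply (f_equal Re) in Ex. apply (f_equal Re) in Ey. simpl in Ex, Ey.
  assert (Ew1 : Dw1 al1 a1 t = (RtoC 2 * Cconj (w2fun al2 a2 t * w3fun al3 a3 t))%C).
  { apply (Ceq_diff _ _ _ (ode_w1 al1 al2 al3 a1 a2 a3 t Ha)). rewrite Hw1. ring. }
  assert (Ew2 : Dw2 al2 a2 t = (- (RtoC 2 * Cconj (w1fun al1 a1 t * w3fun al3 a3 t)))%C).
  { apply (Ceq_diff _ _ _ (ode_w2 al1 al2 al3 a1 a2 a3 t Ha)). rewrite Hw2. ring. }
  assert (Ew3 : Dw3 al3 a3 t = (- (RtoC 2 * Cconj (w1fun al1 a1 t * w2fun al2 a2 t)))%C).
  { apply (Ceq_diff _ _ _ (ode_w3 al1 al2 al3 a1 a2 a3 t Ha)). rewrite Hw3. ring. }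
  set (U := mk7 (y t) (RtoC s1 * w1fun al1 a1 t + p1 t)%C (RtoC s1 * w2fun al2 a2 t + p2 t)%C
              (RtoC s2 * w3fun al3 a3 t + q3 t)%C).
  set (V := mk7 (- x t) (RtoC s2 * w1fun al1 a1 t + q1 t)%C (- (RtoC s2 * w2fun al2 a2 t) - q2 t)%C
              (RtoC s1 * w3fun al3 a3 t + p3 t)%C).
  set (W := mk7 (s1 * Dx lam b c B' C' t - s2 * Dx lam b c B C t
                 + Im (Cconj (p1 t) * q1 t - Cconj (p2 t) * q2 t - Cconj (p3 t) * q3 t)%C)
      (RtoC ((s1 ^ 2 + s2 ^ 2) / 2) * Dw1 al1 a1 t + RtoC s1 * Dp1 a1 lam b d B D t
        + RtoC s2 * Dp1 a1 lam b d B' D' t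
        + (Ci * RtoC (x t) * p1 t + Ci * RtoC (y t) * q1 t + Cconj (p2 t * p3 t) + Cconj (q2 t * q3 t)))%C
      (RtoC ((s1 ^ 2 - s2 ^ 2) / 2) * Dw2 al2 a2 t + RtoC s1 * Dp2 a2 lam c d C D t
        - RtoC s2 * Dp2 a2 lam c d C' D' t
        + (Ci * RtoC (x t) * p2 t - Ci * RtoC (y t) * q2 t - Cconj (p3 t * p1 t) + Cconj (q3 t * q1 t)))%C
      (RtoC (s1 * s2) * Dw3 al3 a3 t + RtoC s1 * Dp3 a3 lam b c d B' C' D' t
        + RtoC s2 * Dp3 a3 lam b c d B C D t
        + (Ci * RtoC (x t) * q3 t + Ci * RtoC (y t) * p3 t - Cconj (p1 t * q2 t) - Cconj (p2 t * q1 t)))%C).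
  assert (HU : forall k, (1 <= k <= 7)%nat -> u k = U k).
  { intros k Hk. apply (deriv_eq _ _ _ _ (Hu k Hk)). apply Mmap_d1; exact Hk. }
  assert (HV : forall k, (1 <= k <= 7)%nat -> v k = V k).
  { intros k Hk. apply (deriv_eq _ _ _ _ (Hv k Hk)). apply Mmap_d2; exact Hk. }
  assert (HW : forall k, (1 <= k <= 7)%nat -> w k = W k).
  { intros k Hk. apply (deriv_eq _ _ _ _ (Hw k Hk)). apply Mmap_dt; try exact Hk.
    - apply der_x.
    - apply der_x.
    - apply Hz.
    - apply der_w1.
    - apply der_w2.
    - apply der_w3.
    - apply der_p1.
    - apply der_p2.
    - apply der_p3.
    - apply der_p1.
    - apply der_p2.
    - apply der_p3.
    - apply cder_of, Hr1.
    - apply cder_of, Hr2.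
    - apply cder_of, Hr3. }
  destruct (phi_vol_ext u v w U V W HU HV HW) as [-> ->].
  apply assoc_of_cross.
  unfold W, U, V.
  apply key.
  all: first [ assumption | reflexivity | symmetry; assumption | idtac ].
Qed.
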